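(* Let $\pi\in[0,1)$, $\epsilon\in\left(0,\tfrac12\right]$, $g>0$, $\underline{\gamma}\in[0,1]$, let $q:[0,1]\to\mathbb{R}$ be Lebesgue integrable, and let $r(x)=\min\{\int_\rho q(z)\,\mathrm{d}z:\rho\subseteq[0,1]\text{ Lebesgue measurable},\ \lambda(\rho)=x\}$ for $x\in[0,1]$ (so $r(0)=0$). Let $$\Gamma^\star=\left\{h\in[0,1]:\ \frac{(1-\pi)(1-\epsilon)-\pi\epsilon g}{(1-\pi)\epsilon}\,h\ \ge\ r(\underline{\gamma}h)\right\}.$$ Suppose the principal's policy $\gamma^\star:[0,1]\to\{0,\underline{\gamma}\}$ punishes at rate $\underline{\gamma}$ exactly in the states where this is credible, i.e. $\gamma^\star(h)=\underline{\gamma}$ if $h\in\Gamma^\star$ and $\gamma^\star(h)=0$ otherwise. Then $\gamma^\star$ is a threshold rule: there exists $\tilde h\in[0,1]$ such that $\gamma^\star(h)=\underline{\gamma}$ for all $h\in[0,\tilde h)$, $\gamma^\star(h)=0$ for all $h\in(\tilde h,1]$, and $\gamma^\star(\tilde h)\in\{0,\underline{\gamma}\}$, where $\gamma^\star(\tilde h)=\underline{\gamma}$ is possible only if $\tilde h$ satisfies the defining inequality of $\Gamma^\star$.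
   Context: In the principal–agent model of technology adoption, $h\in[0,1]$ is the measure of agents with access to a new technology (good with probability $\pi$, yielding $1+g$ if good and $0$ if bad when used), $\epsilon$ is the error probability of the agents' research signal, $\underline{\gamma}$ is the minimal rate of firing failed agents that induces research effort, $q(z)$ is the cost of replacement worker $z$, and $r(x)$ the least cost of replacing a measure $x$ of workers. $\Gamma^\star$ is the set of states in which the principal finds it worthwhile (under commitment) to punish failures at rate $\underline{\gamma}$; the principal only ever uses punishment rates $0$ or $\underline{\gamma}$. *)

(* Defs.v *)
From HB Require Import structures.
From mathcomp Require Import all_boot all_order all_algebra.
From mathcomp Require Import all_classical all_reals all_analysis.
Set Implicit Arguments. Unset Strict Implicit. Unset Printing Implicit Defensive.
Import Order.TTheory GRing.Theory Num.Theory.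
Local Open Scope classical_set_scope.
Local Open Scope ring_scope.

Definition unit_itv (R : realType) : set R := [set x | 0 <= x <= 1].

(* r(x) = min { int_rho q : rho measurable, rho ⊆ [0,1], lambda(rho) = x }.
   Written as the infimum of that set (the minimum is attained by the
   bathtub principle, so inf = min). *)
Definition rcost (R : realType) (q : R -> R) (x : R) : R :=
  inf [set y : R | exists rho : set R,
        [/\ measurable rho, rho `<=` @unit_itv R,
            (lebesgue_measure : measure (measurableTypeR R) R) rho = x%:E &
            y = Rintegral (lebesgue_measure : measure (measurableTypeR R) R) rho q]].

Definition Gamma_star (R : realType) (pi eps g gam : R) (q : R -> R) : set R :=
  [set h : R | 0 <= h <= 1 /\
     ((1 - pi) * (1 - eps) - pi * eps * g) / ((1 - pi) * eps) * h
       >= rcost q (gam * h)].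

(* Main.v *)
Require Import Defs.
From HB Require Import structures.
From mathcomp Require Import all_boot all_order all_algebra.
From mathcomp Require Import all_classical all_reals all_analysis.
From mathcomp Require Import ring lra.
Import Order.TTheory GRing.Theory Num.Theory.
Import numFieldNormedType.Exports.
Set Implicit Arguments.
Local Open Scope classical_set_scope.
Local Open Scope ring_scope.

Local Notation lam R := (lebesgue_measure : measure (measurableTypeR R) R).

Lemma unit_itvE (R : realType) : @unit_itv R = `[0, 1]%classic.
Proof. by apply/seteqP; split => x /=; rewrite in_itv. Qed.

Lemma unit_itv_meas (R : realType) : measurable (@unit_itv R).
Proof. by rewrite unit_itvE; exact: measurable_itv. Qed.

Lemma lam_unit (R : realType) : lam R (@unit_itv R) = 1%:E.
Proof.
have := @lebesgue_measure_itv R `[0, 1]; rewrite /= lte_fin ltr01 sube0 => H.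
by rewrite unit_itvE; exact: H.
Qed.

Lemma lam_sub (R : realType) (A : set R) : measurable A -> A `<=` @unit_itv R ->
  lam R A = (fine (lam R A))%:E /\ 0 <= fine (lam R A) <= 1.
Proof.
move=> mA AU.
have h1 : (lam R A <= 1%:E)%E.
  by rewrite -(@lam_unit R); apply: le_measure => //; rewrite inE //; exact: unit_itv_meas.
have h0 : (0 <= lam R A)%E by exact: measure_ge0.
have hf : lam R A \is a fin_num by rewrite ge0_fin_numE // (le_lt_trans h1) // ltey.
split; first by rewrite fineK.
by rewrite fine_ge0 //= -lee_fin fineK.
Qed.

Lemma intS (R : realType) (q : R -> R) (A : set R) :
  (lam R).-integrable (@unit_itv R) (EFin \o q) -> measurable A -> A `<=` @unit_itv R ->
  (lam R).-integrable A (EFin \o q).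
Proof. move=> hq mA AU; apply: integrableS hq => //. exact: unit_itv_meas. Qed.

Lemma intcst (R : realType) (A : set R) (k : R) : measurable A -> A `<=` @unit_itv R ->
  (lam R).-integrable A (EFin \o cst k).
Proof.
move=> mA AU; apply/integrableP; split; first by apply/measurable_realfun.measurable_EFinP; exact: measurable_cst.
rewrite (_ : (fun x => `|(EFin \o cst k) x|)%E = cst `|k|%:E); last by apply/funext => x.
rewrite integral_cst //.
have [-> _] := lam_sub mA AU.
by rewrite -EFinM ltry.
Qed.

Lemma int_abs_mono (R : realType) (q : R -> R) (A : set R) :
  (lam R).-integrable (@unit_itv R) (EFin \o q) -> measurable A -> A `<=` @unit_itv R ->
  Rintegral (lam R) A (fun x => `|q x|) <= Rintegral (lam R) (@unit_itv R) (fun x => `|q x|).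
Proof.
move=> hq mA AU.
have mU := @unit_itv_meas R.
have mD : measurable (@unit_itv R `\` A) by exact: measurableD.
rewrite -[X in _ <= Rintegral _ X _](setDUK AU) Rintegral_setU //.
- by rewrite lerDl Rintegral_ge0.
- by rewrite (setDUK AU); exact: (integrable_norm hq).
- by rewrite disj_set2E setDIK.
Qed.

Lemma int_lb (R : realType) (q : R -> R) (A : set R) :
  (lam R).-integrable (@unit_itv R) (EFin \o q) -> measurable A -> A `<=` @unit_itv R ->
  - Rintegral (lam R) (@unit_itv R) (fun x => `|q x|) <= Rintegral (lam R) A q.
Proof.
move=> hq mA AU.
have h1 := le_normr_Rintegral (mu := lam R) mA (intS hq mA AU).
have h2 := int_abs_mono hq mA AU.
rewrite lerNl; apply: le_trans _ h2; apply: le_trans _ h1.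
by rewrite -normrN ler_norm.
Qed.

Lemma markov_sub (R : realType) (q : R -> R) (A : set R) (c : R) :
  (lam R).-integrable (@unit_itv R) (EFin \o q) -> measurable A -> A `<=` @unit_itv R ->
  (forall x, A x -> c <= `|q x|) ->
  c * fine (lam R A) <= Rintegral (lam R) (@unit_itv R) (fun x => `|q x|).
Proof.
move=> hq mA AU hc.
apply: le_trans (int_abs_mono hq mA AU).
rewrite -Rintegral_cst //.
apply: le_Rintegral => //; first exact: intcst.
exact: (integrable_norm (intS hq mA AU)).
Qed.

Lemma lam_oc (R : realType) (s t : R) : s <= t -> lam R `]s, t]%classic = (t - s)%:E.
Proof.
move=> st; have := @lebesgue_measure_itv R `]s, t]; rewrite /= lte_fin.
move: st; rewrite le_eqVlt => /predU1P[<-|st].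
  by rewrite ltxx subrr => H; exact: H.
by rewrite st -EFinD => H; exact: H.
Qed.

Definition cumf (R : realType) (E : set R) (s : R) : R :=
  fine (lam R (E `&` `]-oo, s]%classic)).
Arguments cumf {R}.

Lemma cumf_sub (R : realType) (E : set R) (s : R) : measurable E -> E `<=` @unit_itv R ->
  measurable (E `&` `]-oo, s]%classic) /\ (E `&` `]-oo, s]%classic) `<=` @unit_itv R.
Proof.
move=> mE EU; split; first by apply: measurableI => //; exact: measurable_itv.
by move=> x [Ex _]; exact: EU.
Qed.

Lemma cumf_lip (R : realType) (E : set R) (s t : R) : measurable E -> E `<=` @unit_itv R ->
  s <= t -> cumf E s <= cumf E t <= cumf E s + (t - s).
Proof.
move=> mE EU st.
have [ms Us] := cumf_sub s mE EU; have [mt Ut] := cumf_sub t mE EU.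
have [hs _] := lam_sub ms Us; have [ht _] := lam_sub mt Ut.
rewrite /cumf -!lee_fin -hs -ht; apply/andP; split.
  apply: le_measure; rewrite ?inE //.
  move=> x [Ex /=]; rewrite !in_itv /= => xs; split => //.
  by apply: le_trans xs st.
rewrite EFinD -hs -(@lam_oc R s t st).
apply: le_trans (measureU2 (lam R) ms (measurable_itv `]s, t])).
apply: le_measure; rewrite ?inE //; first by apply: measurableU => //; exact: measurable_itv.
move=> x [Ex /=]; rewrite !in_itv /= => xt.
case: (leP x s) => xs; [left | right].
- by split => //=; rewrite in_itv /= xs.
- by rewrite /=; exact: xt.
Qed.

Lemma cumf_cont (R : realType) (E : set R) : measurable E -> E `<=` @unit_itv R ->
  continuous (cumf E).
Proof.
move=> mE EU x; apply/cvgrPdist_lt => e e0; apply/nbhs_ballP; exists e => // t.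
rewrite /ball /= => hxt; apply: le_lt_trans hxt.
case: (leP x t) => xt.
  have /andP[h1 h2] := @cumf_lip R E x t mE EU xt.
  apply: (le_trans (y := t - x)); last by rewrite distrC ler_norm.
  by rewrite ler_norml; apply/andP; split; lra.
have /andP[h1 h2] := @cumf_lip R E t x mE EU (ltW xt).
apply: (le_trans (y := x - t)); last by rewrite ler_norm.
by rewrite ler_norml; apply/andP; split; lra.
Qed.

Lemma meas_ivt (R : realType) (E : set R) (y : R) : measurable E -> E `<=` @unit_itv R ->
  0 <= y <= fine (lam R E) ->
  exists E' : set R, [/\ measurable E', E' `<=` E & lam R E' = y%:E].
Proof.
move=> mE EU hy.
have f0 : cumf E (-1) = 0.
  rewrite /cumf (_ : _ `&` _ = set0) ?measure0 //.
  apply/seteqP; split => // x [/EU /andP [x0 _]] /=; rewrite in_itv /= => x1.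
  have := le_trans x0 x1; lra.
have f1 : cumf E 1 = fine (lam R E).
  rewrite /cumf setIidl // => x /EU /andP[_ x1] /=; rewrite in_itv /= x1 //.
have [c _ fc] : exists2 c, c \in `[-1, 1] & cumf E c = y.
  apply: IVT; first lra.
    exact/continuous_subspaceT/cumf_cont.
  rewrite f0 f1; have [h0 h1] := andP hy.
  have fE : 0 <= fine (lam R E) by exact: le_trans h1.
  by rewrite (min_idPl fE) (max_idPr fE) h0 h1.
have [mc Uc] := cumf_sub c mE EU.
exists (E `&` `]-oo, c]%classic); split => //.
have [-> _] := lam_sub mc Uc; by rewrite -fc.
Qed.

Lemma finU (R : realType) (A B : set R) : measurable A -> measurable B ->
  A `<=` @unit_itv R -> B `<=` @unit_itv R -> A `&` B = set0 ->
  fine (lam R (A `|` B)) = fine (lam R A) + fine (lam R B).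
Proof.
move=> mA mB AU BU AB.
rewrite (measureU (lam R) mA mB AB).
have [hA _] := lam_sub mA AU; have [hB _] := lam_sub mB BU.
have hAf : lam R A \is a fin_num by rewrite hA.
have hBf : lam R B \is a fin_num by rewrite hB.
by rewrite (fineD hAf hBf).
Qed.

Lemma mpre (R : realType) (q : R -> R) (rho Y : set R) :
  (lam R).-integrable (@unit_itv R) (EFin \o q) -> measurable rho -> rho `<=` @unit_itv R ->
  measurable Y -> measurable (rho `&` q @^-1` Y).
Proof.
move=> hq mr rU mY.
have mq : measurable_fun (@unit_itv R) q.
  by apply/measurable_realfun.measurable_EFinP; exact: (measurable_int (lam R) hq).
rewrite (_ : rho `&` q @^-1` Y = rho `&` (@unit_itv R `&` q @^-1` Y)).
  by apply: measurableI => //; apply: mq => //; exact: unit_itv_meas.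
apply/seteqP; split => z /=; first by move=> [rz qz]; split => //; split => //; exact: rU.
by move=> [rz [_ qz]].
Qed.

Lemma int_le_cst (R : realType) (q : R -> R) (A : set R) (k : R) :
  (lam R).-integrable (@unit_itv R) (EFin \o q) -> measurable A -> A `<=` @unit_itv R ->
  (forall z, A z -> q z <= k) -> Rintegral (lam R) A q <= k * fine (lam R A).
Proof.
move=> hq mA AU hk; rewrite -Rintegral_cst //.
apply: le_Rintegral => //; first exact: (intS hq mA AU).
exact: intcst.
Qed.

Lemma int_ge_cst (R : realType) (q : R -> R) (A : set R) (k : R) :
  (lam R).-integrable (@unit_itv R) (EFin \o q) -> measurable A -> A `<=` @unit_itv R ->
  (forall z, A z -> k <= q z) -> k * fine (lam R A) <= Rintegral (lam R) A q.
Proof.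
move=> hq mA AU hk; rewrite -Rintegral_cst //.
apply: le_Rintegral => //; first exact: intcst.
exact: (intS hq mA AU).
Qed.

Lemma int_split (R : realType) (q : R -> R) (A B : set R) :
  (lam R).-integrable (@unit_itv R) (EFin \o q) -> measurable A -> measurable B ->
  A `<=` @unit_itv R -> B `<=` @unit_itv R -> A `&` B = set0 ->
  Rintegral (lam R) (A `|` B) q = Rintegral (lam R) A q + Rintegral (lam R) B q.
Proof.
move=> hq mA mB AU BU AB.
apply: Rintegral_setU => //.
- apply: (intS hq) => //; first exact: measurableU.
  by move=> z [/AU|/BU].
- by rewrite disj_set2E AB.
Qed.

Lemma star_step (R : realType) (q : R -> R) (rho : set R) (t eta : R) :
  (lam R).-integrable (@unit_itv R) (EFin \o q) -> measurable rho -> rho `<=` @unit_itv R ->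
  0 < fine (lam R rho) -> 0 < t < 1 -> 0 < eta ->
  exists rho' : set R, [/\ measurable rho', rho' `<=` @unit_itv R,
     lam R rho' = (t * fine (lam R rho))%:E &
     Rintegral (lam R) rho' q <= t * Rintegral (lam R) rho q + eta].
Proof.
move=> hq mr rU x0 /andP[t0 t1] e0.
set x := fine (lam R rho).
have [hx /andP[_ x1]] := lam_sub mr rU.
set M := Rintegral (lam R) (@unit_itv R) (fun z => `|q z|).
have M0 : 0 <= M by apply: Rintegral_ge0.
pose A c := rho `&` q @^-1` `]-oo, c[%classic.
pose D c := rho `&` q @^-1` `[c, +oo[%classic.
pose a c := fine (lam R (A c)).
have mA c : measurable (A c) by apply: mpre => //; exact: measurable_itv.
have mD c : measurable (D c) by apply: mpre => //; exact: measurable_itv.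
have AU c : A c `<=` @unit_itv R by move=> z [/rU].
have DU c : D c `<=` @unit_itv R by move=> z [/rU].
have AD c : A c `&` D c = set0.
  apply/seteqP; split => z // [[_ /=]]; rewrite !in_itv /= => h1 [_ /=].
  by rewrite in_itv /= andbT leNgt h1.
have ADr c : A c `|` D c = rho.
  apply/seteqP; split => z; first by case=> -[].
  move=> rz; case: (ltP (q z) c) => h; [left | right]; split => //=; rewrite in_itv //=.
  by rewrite h.
have xsplit c : x = a c + fine (lam R (D c)).
  by have := finU (mA c) (mD c) (AU c) (DU c) (AD c); rewrite ADr.
have a0 c : 0 <= a c by have [_ /andP[]] := lam_sub (mA c) (AU c).
have d0 c : 0 <= fine (lam R (D c)) by have [_ /andP[]] := lam_sub (mD c) (DU c).
pose C := [set c | a c <= t * x].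
have tx0 : 0 < t * x by rewrite mulr_gt0.
have C0 : C (- (M / (t * x)) - 1).
  set K := M / (t * x) + 1.
  have K0 : 0 < K by rewrite /K; apply: ltr_pwDr => //; rewrite divr_ge0 // ltW.
  have KE : K * (t * x) = M + t * x by rewrite /K mulrDl mulfVK ?mul1r // gt_eqF.
  have hm := @markov_sub R q _ K hq (mA (- (M / (t * x)) - 1)) (AU _).
  have : K * a (- (M / (t * x)) - 1) <= M.
    apply: hm => z [_ /=]; rewrite in_itv /= => hz.
    rewrite -normrN; apply: le_trans (ler_norm _); rewrite /K; lra.
  rewrite /C /=; nra.
have Cub : ubound C (M / ((1 - t) * x) + 1).
  move=> c; rewrite /C /= => hc.
  set K := M / ((1 - t) * x) + 1.
  rewrite leNgt; apply/negP => hK.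
  have tx1 : 0 < (1 - t) * x by rewrite mulr_gt0 // subr_gt0.
  have K0 : 0 < K by rewrite /K; apply: ltr_pwDr => //; rewrite divr_ge0 // ltW.
  have KE : K * ((1 - t) * x) = M + (1 - t) * x by rewrite /K mulrDl mulfVK ?mul1r // gt_eqF.
  have : c * fine (lam R (D c)) <= M.
    apply: (@markov_sub R q _ c hq (mD c) (DU c)) => z [_ /=]; rewrite in_itv /= andbT => hz.
    by apply: le_trans hz (ler_norm _).
  have xs := xsplit c.
  have h1 : (1 - t) * x <= fine (lam R (D c)) by lra.
  have h2 : 0 <= c * (fine (lam R (D c)) - (1 - t) * x) by apply: mulr_ge0; lra.
  have h3 : 0 < (c - K) * ((1 - t) * x) by apply: mulr_gt0; lra.
  nra.
have hsup : has_sup C by split; [exists (- (M / (t * x)) - 1) | exists (M / ((1 - t) * x) + 1)].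
have [c Cc cs] := sup_adherent e0 hsup.
have nC : ~ C (c + eta).
  move=> /(sup_upper_bound hsup) h; lra.
have ace : t * x < a (c + eta) by rewrite ltNge; apply/negP => h; apply: nC.
pose B := rho `&` q @^-1` `[c, c + eta[%classic.
have mB : measurable B by apply: mpre => //; exact: measurable_itv.
have BU : B `<=` @unit_itv R by move=> z [/rU].
have AB : A c `&` B = set0.
  apply/seteqP; split => z // [[_ /=]]; rewrite !in_itv /= => h1 [_ /=].
  by rewrite in_itv /= leNgt h1.
have ABr : A c `|` B = A (c + eta).
  apply/seteqP; split => z.
    case=> -[rz /=]; rewrite !in_itv /= => hz.
      by split => //=; rewrite in_itv /=; lra.
    by split => //=; rewrite in_itv /=; case/andP: hz.
  move=> [rz /=]; rewrite in_itv /= => hz.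
  case: (ltP (q z) c) => h; [left | right]; split => //=; rewrite in_itv /= ?h //.
have asp : a (c + eta) = a c + fine (lam R B).
  by have := finU (mA c) mB (AU c) BU AB; rewrite ABr.
have Cc' : a c <= t * x by exact: Cc.
have [E [mE EB hE]] := @meas_ivt R B (t * x - a c) mB BU ltac:(apply/andP; split; lra).
have EU : E `<=` @unit_itv R by move=> z /EB /BU.
have AE : A c `&` E = set0.
  apply/seteqP; split => z // [zA /EB zB].
  have : (A c `&` B) z by split.
  by rewrite AB.
have hEf : fine (lam R E) = t * x - a c by rewrite hE.
exists (A c `|` E); split.
- exact: measurableU.
- by move=> z [/AU|/EU].
- have mAE : measurable (A c `|` E) by exact: measurableU.
  have AEU : A c `|` E `<=` @unit_itv R by move=> z [/AU|/EU].
  have [-> _] := lam_sub mAE AEU.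
  rewrite finU // hEf; congr EFin; rewrite /a; lra.
rewrite int_split //.
have IE : Rintegral (lam R) E q <= (c + eta) * fine (lam R E).
  apply: int_le_cst => // z /EB [_ /=]; rewrite in_itv /= => /andP[_ h]; exact: ltW.
have IA : Rintegral (lam R) (A c) q <= c * a c.
  apply: int_le_cst => // z [_ /=]; rewrite in_itv /= => h; exact: ltW.
have ID : c * fine (lam R (D c)) <= Rintegral (lam R) (D c) q.
  by apply: int_ge_cst => // z [_ /=]; rewrite in_itv /= andbT.
have Ir : Rintegral (lam R) rho q = Rintegral (lam R) (A c) q + Rintegral (lam R) (D c) q.
  by rewrite -int_split // ADr.
have xs := xsplit c.
rewrite Ir; rewrite hEf in IE.
have xle : t * x <= x by rewrite ger_pMl // ltW.
have x1' : x <= 1 by exact: x1.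
have ac0 := a0 c.
have h1 : 0 <= (1 - t) * (c * a c - Rintegral (lam R) (A c) q) by apply: mulr_ge0; lra.
have h2 : 0 <= t * (Rintegral (lam R) (D c) q - c * (x - a c)).
  apply: mulr_ge0; first lra.
  have -> : x - a c = fine (lam R (D c)) by rewrite xs; lra.
  lra.
have h3 : 0 <= eta * (1 - (t * x - a c)) by apply: mulr_ge0; lra.
nra.
Qed.

Lemma fine_eq (R : realType) (u : \bar R) (x : R) : u = x%:E -> fine u = x.
Proof. by move=> ->. Qed.

Lemma rc_lb (R : realType) (q : R -> R) (x : R) :
  (lam R).-integrable (@unit_itv R) (EFin \o q) ->
  lbound [set y : R | exists rho : set R,
        [/\ measurable rho, rho `<=` @unit_itv R, lam R rho = x%:E &
            y = Rintegral (lam R) rho q]]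
    (- Rintegral (lam R) (@unit_itv R) (fun x => `|q x|)).
Proof. by move=> hq y [rho [mr rU _ ->]]; exact: int_lb. Qed.

Lemma rc_le (R : realType) (q : R -> R) (x : R) (rho : set R) :
  (lam R).-integrable (@unit_itv R) (EFin \o q) ->
  measurable rho -> rho `<=` @unit_itv R -> lam R rho = x%:E ->
  rcost q x <= Rintegral (lam R) rho q.
Proof.
move=> hq mr rU hr; rewrite /rcost.
apply: ge_inf; first by eexists; exact: rc_lb.
by exists rho.
Qed.

Lemma rc0 (R : realType) (q : R -> R) :
  (lam R).-integrable (@unit_itv R) (EFin \o q) -> rcost q 0 <= 0.
Proof.
move=> hq; have := @rc_le R q 0 set0 hq measurable0 (sub0set _) (measure0 _).
by rewrite Rintegral_set0.
Qed.

Lemma rc_star (R : realType) (q : R -> R) (x t : R) :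
  (lam R).-integrable (@unit_itv R) (EFin \o q) ->
  0 <= x <= 1 -> 0 <= t <= 1 -> rcost q (t * x) <= t * rcost q x.
Proof.
move=> hq /andP[x0 x1] /andP[t0 t1].
have r0 := rc0 hq.
move: t0; rewrite le_eqVlt => /predU1P[<-|t0]; first by rewrite !mul0r.
move: t1; rewrite le_eqVlt => /predU1P[->|t1]; first by rewrite !mul1r.
move: x0; rewrite le_eqVlt => /predU1P[<-|x0].
  rewrite mulr0; nra.
apply/ler_addgt0Pr => e e0.
have : (rcost q (t * x) - e) / t <= rcost q x.
  apply: lb_le_inf.
    have [|E [mE EU hE]] := @meas_ivt R (@unit_itv R) x (@unit_itv_meas R) (@subset_refl _ _).
      by rewrite lam_unit /= x1 ltW.
    by exists (Rintegral (lam R) E q), E.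
  move=> y [rho [mr rU hr ->]].
  have [rho' [mr' rU' hr' hc]] := @star_step R q rho t e hq mr rU
    ltac:(by rewrite (@fine_eq R _ _ hr)) ltac:(by rewrite t0 t1) e0.
  have := @rc_le R q (t * x) rho' hq mr' rU' ltac:(by rewrite hr' (@fine_eq R _ _ hr)).
  move=> hr2.
  by rewrite ler_pdivrMr //; lra.
by rewrite ler_pdivrMr // => h; nra.
Qed.

Lemma gs_down (R : realType) (pi eps g gam : R) (q : R -> R) (h s : R) :
  (lam R).-integrable (@unit_itv R) (EFin \o q) -> 0 <= gam <= 1 ->
  Gamma_star pi eps g gam q s -> 0 <= h < s -> Gamma_star pi eps g gam q h.
Proof.
move=> hq /andP[g0 g1] [/andP[s0 s1] hs] /andP[h0 hs'].
set c0 := ((1 - pi) * (1 - eps) - pi * eps * g) / ((1 - pi) * eps).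
have s0' : 0 < s by exact: le_lt_trans hs'.
split; first by apply/andP; split => //; lra.
have t01 : 0 <= h / s <= 1.
  by rewrite divr_ge0 //= ler_pdivrMr // mul1r ltW.
have x01 : 0 <= gam * s <= 1.
  by rewrite mulr_ge0 //= mulr_ile1.
have := @rc_star R q (gam * s) (h / s) hq x01 t01.
have -> : h / s * (gam * s) = gam * h by field; rewrite gt_eqF.
move=> H; apply: le_trans H _.
have : h / s * rcost q (gam * s) <= h / s * (c0 * s).
  by apply: ler_wpM2l; [case/andP: t01 | exact: hs].
have -> : h / s * (c0 * s) = c0 * h by field; rewrite gt_eqF.
by [].
Qed.

Unset Implicit Arguments.

Theorem proposition1 (R : realType) (pi eps g gam : R) (q : R -> R)
  (gstar : R -> R)
  (hpi : 0 <= pi < 1) (heps : 0 < eps <= 2^-1) (hg : 0 < g)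
  (hgam : 0 <= gam <= 1)
  (hq : (lebesgue_measure : measure (measurableTypeR R) R).-integrable (@unit_itv R) (EFin \o q))
  (hstar_in : forall h, 0 <= h <= 1 -> Gamma_star pi eps g gam q h ->
                gstar h = gam)
  (hstar_out : forall h, 0 <= h <= 1 -> ~ Gamma_star pi eps g gam q h ->
                gstar h = 0) :
  exists ht : R, [/\ 0 <= ht <= 1,
    (forall h, 0 <= h < ht -> gstar h = gam),
    (forall h, ht < h <= 1 -> gstar h = 0),
    (gstar ht = 0 \/ gstar ht = gam) &
    (gstar ht = gam -> Gamma_star pi eps g gam q ht)].
Proof.
set S := Gamma_star pi eps g gam q.
have G0 : S 0.
  split; first by apply/andP; split; lra.
  by rewrite !mulr0; exact: rc0.
have h01 : ((0 : R) <= 0) && ((0 : R) <= 1) by apply/andP; split; lra.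
have [gam0e|gam0] := eqVneq gam 0.
  subst gam.
  exists 0; split => //.
  - by move=> h /andP[h0 h1]; have := le_lt_trans h0 h1; rewrite ltxx.
  - move=> h /andP[h0 h1]; have hh : 0 <= h <= 1 by rewrite ltW.
    by case: (pselect (S h)) => Sh; [exact: hstar_in | exact: hstar_out].
  - by right; exact: hstar_in.
have hsup : has_sup S.
  split; first by exists 0.
  by exists 1 => h [/andP[_ h1] _].
have sup0 : 0 <= sup S by exact: sup_upper_bound.
have sup1 : sup S <= 1.
  by apply: ge_sup; [exists 0 | move=> h [/andP[_ h1] _]].
have s01 : 0 <= sup S <= 1 by rewrite sup0 sup1.
exists (sup S); split => //.
- move=> h /andP[h0 hs].
  have e0 : 0 < sup S - h by rewrite subr_gt0.
  have [s Ss ss] := sup_adherent e0 hsup.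
  have Sh : S h.
    apply: (@gs_down R pi eps g gam q h s hq hgam Ss); rewrite h0 /=; lra.
  by apply: hstar_in => //; case: Sh.
- move=> h /andP[hs h1].
  have hh : 0 <= h <= 1 by rewrite h1 andbT; exact: le_trans sup0 (ltW hs).
  apply: hstar_out => // Sh.
  by have := sup_upper_bound hsup Sh; rewrite leNgt hs.
- case: (pselect (S (sup S))) => Ss; [right; exact: hstar_in | left; exact: hstar_out].
- case: (pselect (S (sup S))) => Ss // h.
  by move: gam0; rewrite -h hstar_out // eqxx.
Qed.
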